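(* Let $G=(V,E)$ be a graph and $\mathbb{F}$ a field. Suppose there exist a proper coloring $c:V\to[m]$ of $G$ and vectors $u_1,\dots,u_m\in\mathbb{F}^t$ such that for every $v\in V$ the vectors $\{u_{c(v')}: v'\in\{v\}\cup N(v)\}$ (indexed by the colors appearing in the closed neighborhood of $v$) are linearly independent over $\mathbb{F}$. Then $\mathrm{minrk}_{\mathbb{F}}(\overline{G})\le t$.
   Context: $\overline{G}$ denotes the complement of $G$, and $N(v)$ the neighborhood of $v$. For a graph $H$ on vertex set $[n]$, a matrix $M\in\mathbb{F}^{n\times n}$ represents $H$ if $M_{i,i}\ne0$ for all $i$ and $M_{i,j}=0$ for all distinct non-adjacent $i,j$. The minrank $\mathrm{minrk}_{\mathbb{F}}(H)$ is the minimum rank over $\mathbb{F}$ of a matrix representing $H$. *)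

(* Defs.v *)
From HB Require Import structures.
From mathcomp Require Import all_boot all_order all_algebra.
From mathcomp Require Import boolp.
Set Implicit Arguments. Unset Strict Implicit. Unset Printing Implicit Defensive.
Import Order.TTheory GRing.Theory Num.Theory.
Local Open Scope ring_scope.

(* A (simple) graph on vertex set [n] = 'I_n is an adjacency relation
   (assumed symmetric and irreflexive where relevant). *)

Definition compl_graph n (e : rel 'I_n) : rel 'I_n :=
  fun i j => (i != j) && ~~ e i j.

Definition closed_nbhd n (e : rel 'I_n) (v : 'I_n) : {set 'I_n} :=
  [set w | (w == v) || e v w].

Definition represents (F : fieldType) n (H : rel 'I_n) (M : 'M[F]_n) : Prop :=
  (forall i, M i i != 0) /\ (forall i j, i != j -> ~~ H i j -> M i j = 0).

Lemma minrk_ex (F : fieldType) n (H : rel 'I_n) :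
  exists r : nat, `[< exists M : 'M[F]_n, represents H M /\ (\rank M = r)%N >].
Proof.
exists n; apply/asboolP; exists 1%:M; split; last exact: mxrank1.
split=> [i|i j ij _]; rewrite mxE ?eqxx ?oner_neq0 //.
by rewrite (negbTE ij).
Qed.

Definition minrk (F : fieldType) n (H : rel 'I_n) : nat :=
  ex_minn (minrk_ex F H).

(* Main.v *)
Require Import Defs.
From mathcomp Require Import all_boot all_order all_algebra.
From mathcomp Require Import boolp.
Import GRing.Theory.
Local Open Scope ring_scope.

Lemma coord_row (F : fieldType) (t p : nat) (X : p.-tuple 'rV[F]_t) (i : 'I_p)
  (x : 'rV[F]_t) :
  coord X i x = \sum_k coord X i (delta_mx 0 k) * x 0 k.
Proof.
rewrite {1}(row_sum_delta x) linear_sum; apply: eq_bigr => k _.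
by rewrite linearZ /= mulrC.
Qed.

Lemma vertex_fun (F : fieldType) (n m t : nat) (e : rel 'I_n)
  (c : 'I_n -> 'I_m) (c_proper : forall x y, e x y -> c x != c y)
  (u : 'I_m -> 'rV[F]_t) (v : 'I_n)
  (hv : free [seq u j | j <- enum (c @: closed_nbhd e v)]) :
  exists g : 'I_t -> F,
    (\sum_k g k * u (c v) 0 k != 0) /\
    (forall w, e v w -> \sum_k g k * u (c w) 0 k = 0).
Proof.
set s := enum (c @: closed_nbhd e v).
set X := in_tuple [seq u j | j <- s].
have memS w : (w == v) || e v w -> c w \in s.
  move=> hw; rewrite mem_enum; apply/imsetP; exists w => //.
  by rewrite /closed_nbhd inE.
have cvs : c v \in s by apply: memS; rewrite eqxx.
have ltv : (index (c v) s < size X)%N by rewrite size_tuple size_map index_mem.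
pose i := Ordinal ltv.
have Xnth w (hw : c w \in s) (ltw : (index (c w) s < size X)%N) :
    X`_(Ordinal ltw) = u (c w).
  rewrite /= (nth_map (c w)); first by rewrite nth_index.
  by rewrite index_mem.
exists (fun k => coord X i (delta_mx 0 k)); split.
  rewrite -coord_row -(Xnth v cvs ltv) coord_free // eqxx oner_neq0 //.
move=> w hw.
have cws : c w \in s by apply: memS; rewrite hw orbT.
have ltw : (index (c w) s < size X)%N by rewrite size_tuple size_map index_mem.
rewrite -coord_row -(Xnth w cws ltw) coord_free //.
case: eqP => // /(congr1 val) /= hidx.
have : c w = c v by rewrite -(nth_index (c w) cws) hidx nth_index.
by move=> h; move: (c_proper _ _ hw); rewrite h eqxx.
Qed.

Theorem mainTheorem9 (F : fieldType) (n m t : nat) (e : rel 'I_n)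
  (e_sym : symmetric e) (e_irr : irreflexive e)
  (c : 'I_n -> 'I_m) (c_proper : forall x y, e x y -> c x != c y)
  (u : 'I_m -> 'rV[F]_t)
  (u_indep : forall v : 'I_n,
     free [seq u j | j <- enum (c @: closed_nbhd e v)]) :
  (minrk F (compl_graph e) <= t)%N.
Proof.
have [g hg] := fin_all_exists (fun v : 'I_n => @vertex_fun F n m t e c c_proper u v (u_indep v)).
pose P : 'M[F]_(n, t) := \matrix_(v, k) g v k.
pose Q : 'M[F]_(t, n) := \matrix_(k, w) u (c w) 0 k.
have ME v w : (P *m Q) v w = \sum_k g v k * u (c w) 0 k.
  by rewrite !mxE; apply: eq_bigr => k _; rewrite !mxE.
have rep : represents (compl_graph e) (P *m Q).
  split=> [i|i j ij].
    by rewrite ME; case: (hg i).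
  rewrite /compl_graph ij /= negbK => hij.
  by rewrite ME; case: (hg i) => _ ->.
have H1 : (minrk F (compl_graph e) <= \rank (P *m Q))%N.
  rewrite /minrk; case: (ex_minnP (minrk_ex F (compl_graph e))) => r _ Hmin.
  apply: Hmin; apply/asboolP; exists (P *m Q); split=> //.
apply: (leq_trans H1); apply: (leq_trans (mxrankM_maxl P Q)).
exact: rank_leq_col.
Qed.
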